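(* Let $A = \begin{pmatrix} 1 & 2 \\ 0 & 1 \end{pmatrix}$, $B = \begin{pmatrix} 1 & 0 \\ 2 & 1 \end{pmatrix}$ and $C = \begin{pmatrix} 2 & 1 \\ 1 & 1 \end{pmatrix}$, viewed as matrices over $\mathbb{Z}$. Then the semigroup generated by $A$, $B$, $C$ under matrix multiplication is free on $\{A, B, C\}$. That is, if $w_1 \cdots w_m$ and $v_1 \cdots v_k$ are products with each $w_i, v_j \in \{A,B,C\}$ and $w_1\cdots w_m = v_1 \cdots v_k$ as matrices, then $m = k$ and $w_i = v_i$ for all $i$. *)

(* Defs.v *)
From mathcomp Require Import all_boot all_order all_algebra.
Set Implicit Arguments. Unset Strict Implicit. Unset Printing Implicit Defensive.
Import GRing.Theory.
Local Open Scope ring_scope.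

Definition mx2 (a b c d : int) : 'M[int]_2 :=
  \matrix_(i < 2, j < 2)
    (if i == 0 :> nat then (if j == 0 :> nat then a else b)
     else (if j == 0 :> nat then c else d)).

Definition matA : 'M[int]_2 := mx2 1 2 0 1.
Definition matB : 'M[int]_2 := mx2 1 0 2 1.
Definition matC : 'M[int]_2 := mx2 2 1 1 1.

Definition word_prod (w : seq 'M[int]_2) : 'M[int]_2 := \prod_(M <- w) M.

(* Main.v *)
Require Import Defs.
From mathcomp Require Import all_boot all_order all_algebra.
From mathcomp Require Import zify.
Import GRing.Theory Num.Theory.
Local Open Scope ring_scope.

Definition i0 : 'I_2 := ord0.
Definition i1 : 'I_2 := ord_max.

Lemma wi0 h : widen_ord (m:=2) h (@ord_max 0) = i0.
Proof. by apply: val_inj. Qed.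

Lemma mulE (p q r s : int) (N : 'M[int]_2) :
  [/\ (mx2 p q r s * N) i0 i0 = p * N i0 i0 + q * N i1 i0,
      (mx2 p q r s * N) i0 i1 = p * N i0 i1 + q * N i1 i1,
      (mx2 p q r s * N) i1 i0 = r * N i0 i0 + s * N i1 i0 &
      (mx2 p q r s * N) i1 i1 = r * N i0 i1 + s * N i1 i1].
Proof. by split; rewrite -mulmxE mxE !big_ord_recr big_ord0 /= !mxE /= wi0 add0r. Qed.

Lemma oneE : [/\ (1 : 'M[int]_2) i0 i0 = 1, (1 : 'M[int]_2) i0 i1 = 0,
   (1 : 'M[int]_2) i1 i0 = 0 & (1 : 'M[int]_2) i1 i1 = 1].
Proof. by split; rewrite [LHS]mxE. Qed.

Lemma mx_ext (M N : 'M[int]_2) :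
  M i0 i0 = N i0 i0 -> M i0 i1 = N i0 i1 -> M i1 i0 = N i1 i0 ->
  M i1 i1 = N i1 i1 -> M = N.
Proof.
move=> h1 h2 h3 h4; apply/matrixP => i j.
have o2 (k : 'I_2) : k = i0 \/ k = i1.
  case: k => [[|[|k]] Hk]; [left|right|by []]; exact: val_inj.
by case: (o2 i) => ->; case: (o2 j) => ->.
Qed.

Lemma m00 p q r s N : (mx2 p q r s * N) i0 i0 = p * N i0 i0 + q * N i1 i0.
Proof. by case: (mulE p q r s N). Qed.
Lemma m01 p q r s N : (mx2 p q r s * N) i0 i1 = p * N i0 i1 + q * N i1 i1.
Proof. by case: (mulE p q r s N). Qed.
Lemma m10 p q r s N : (mx2 p q r s * N) i1 i0 = r * N i0 i0 + s * N i1 i0.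
Proof. by case: (mulE p q r s N). Qed.
Lemma m11 p q r s N : (mx2 p q r s * N) i1 i1 = r * N i0 i1 + s * N i1 i1.
Proof. by case: (mulE p q r s N). Qed.

Ltac gen4 N := move: (N i0 i0) (N i0 i1) (N i1 i0) (N i1 i1) => ? ? ? ?.

Definition Pm (N : 'M[int]_2) : Prop :=
  (0 <= N i0 i0) /\ (0 <= N i0 i1) /\ (0 <= N i1 i0) /\ (0 <= N i1 i1) /\
      (0 < N i0 i0 + N i0 i1) /\ (0 < N i1 i0 + N i1 i1).

Definition gens := [:: matA; matB; matC].

Lemma gensP (X : 'M[int]_2) : X \in gens -> X = matA \/ X = matB \/ X = matC.
Proof. by rewrite !inE => /or3P [] /eqP ->; auto. Qed.

Lemma P_gen (X N : 'M[int]_2) : X \in gens -> Pm N -> Pm (X * N).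
Proof.
move=> /gensP [->|[->|->]];
 rewrite /matA /matB /matC /Pm; rewrite !m00 !m01 !m10 !m11; gen4 N; lia.
Qed.

Lemma P_word w : all (fun M => M \in gens) w -> Pm (word_prod w).
Proof.
elim: w => [|X w IH] /=.
  by move=> _; rewrite /word_prod big_nil /Pm; case: oneE => -> -> -> ->; lia.
move=> /andP [hX hw]; rewrite /word_prod big_cons; exact: P_gen _ _ hX (IH hw).
Qed.

Lemma not_one (X N : 'M[int]_2) : X \in gens -> Pm N -> X * N <> 1.
Proof.
move=> hX hN H.
have e1 := congr1 (fun M : 'M[int]_2 => M i0 i0) H.
have e2 := congr1 (fun M : 'M[int]_2 => M i0 i1) H.
have e3 := congr1 (fun M : 'M[int]_2 => M i1 i0) H.
have e4 := congr1 (fun M : 'M[int]_2 => M i1 i1) H.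
move: e1 e2 e3 e4 hN; rewrite /=; case: oneE => -> -> -> ->.
case/gensP: hX => [->|[->|->]];
 rewrite /matA /matB /matC /Pm; rewrite !m00 !m01 !m10 !m11; gen4 N; lia.
Qed.

Lemma first (X Y N1 N2 : 'M[int]_2) : X \in gens -> Y \in gens -> Pm N1 -> Pm N2 ->
  X * N1 = Y * N2 -> X = Y /\ N1 = N2.
Proof.
move=> hX hY h1 h2 H.
have e1 := congr1 (fun M : 'M[int]_2 => M i0 i0) H.
have e2 := congr1 (fun M : 'M[int]_2 => M i0 i1) H.
have e3 := congr1 (fun M : 'M[int]_2 => M i1 i0) H.
have e4 := congr1 (fun M : 'M[int]_2 => M i1 i1) H.
move: e1 e2 e3 e4 h1 h2; rewrite /= /Pm.
case/gensP: hX => [->|[->|->]]; case/gensP: hY => [->|[->|->]];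
 rewrite /matA /matB /matC; rewrite !m00 !m01 !m10 !m11;
 try (gen4 N1; gen4 N2; intros; exfalso; lia); move=> e1 e2 e3 e4 h1 h2;
 (split; [by [] | apply: mx_ext; move: e1 e2 e3 e4 h1 h2; gen4 N1; gen4 N2; lia]).
Qed.

Theorem proposition1 (w v : seq 'M[int]_2) :
  all (fun M => M \in [:: matA; matB; matC]) w ->
  all (fun M => M \in [:: matA; matB; matC]) v ->
  word_prod w = word_prod v ->
  size w = size v /\ (forall i : nat, (i < size w)%N -> nth 0 w i = nth 0 v i).
Proof.
elim: w v => [|X w IH] [|Y v] //=.
- move=> _ /andP [hY hv]; rewrite /word_prod big_nil big_cons => H.
  by exfalso; apply: (not_one _ _ hY (P_word _ hv)); rewrite -H.
- move=> /andP [hX hw] _; rewrite /word_prod big_nil big_cons => H.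
  by exfalso; apply: (not_one _ _ hX (P_word _ hw)).
move=> /andP [hX hw] /andP [hY hv]; rewrite /word_prod !big_cons => H.
have [eXY eN] := first _ _ _ _ hX hY (P_word _ hw) (P_word _ hv) H.
have [hs hn] := IH v hw hv eN.
split; first by rewrite hs.
by case=> [|i] //= hi; apply: hn.
Qed.
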